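(* Let $D_L$ be an oriented link diagram in $S^2$ in which every component passes through at least one crossing, and let $\Gamma_M$ be the perfect matching graph obtained by flattening all crossings of $D_L$ (the closed web associated to $D_L$), representing the planar trivalent graph $G$ with perfect matching $M$. Then $(G,M)\in\mathscr G$; that is, no perfect matching graph representing $(G,M)$ has a bad face in its hypercube of states.
   Context: Flattening a crossing of an oriented link diagram: in a small disk around the crossing, whose boundary meets the diagram in two incoming ends $p,q$ and two outgoing ends $r,s$, replace the crossing by two trivalent vertices $u$ (joined to $p,q$) and $v$ (joined to $r,s$) and an edge $uv$, with no crossings. Flattening all crossings yields a planar trivalent graph $G$ (multiple edges allowed) embedded in $S^2$, and the set $M$ of new edges is a perfect matching; the embedding with $M$ is the perfect matching graph $\Gamma_M$. A perfect matching graph is an embedding in $S^2$ of a planar trivalent graph with a perfect matching $M=\{M_1,\dots,M_n\}$ (ordered). Resolution configurations: $D=(Z(D),A(D))$, $Z(D)$ a finite set of circles immersed in $S^2$ (union has only transverse double points), $A(D)$ a finite totally ordered set of disjoint embedded arcs meeting the circles exactly in their endpoints. Surgery $s_A(D)$ along $A$: in a small disk around $A$ meeting the circles in segments with ends $z,w$ and $x,y$ ($z,x$ on one side of $A$), replace them by strands $z$–$y$ and $x$–$w$ crossing once; arcs become $A(D)\setminus\{A\}$. An arc is an $\eta$-, $\Delta$-, or $m$-arc according as surgery changes the number of circles by $0,+1,-1$. Resolutions: for a matching edge $e=uv$, let $a,b$ be the other edges at $u$ and $c,d$ those at $v$, with $a,c$ on the same side of $e$. The $0$-resolution removes $u,v,e$,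 joins $a$–$c$ and $b$–$d$ by disjoint strands parallel to $e$, and places an arc joining them; the $1$-resolution joins $a$–$d$ and $b$–$c$ by strands crossing once, no arc. $D_{\Gamma_M}(v)$, $v\in\{0,1\}^n$, takes the $v_i$-resolution at $M_i$, arcs $A_i$ ($v_i=0$) ordered by $i$. Bad face: states $v,u$ differing exactly in coordinates $i\neq j$, $v_i=v_j=0$, $u_i=u_j=1$, such that for some ordering of $\{i,j\}$: $A_i$ is an $\eta$-arc of $D_{\Gamma_M}(v)$, $A_j$ is an $\eta$-arc of $s_{A_i}(D_{\Gamma_M}(v))$, $A_j$ is a $\Delta$-arc of $D_{\Gamma_M}(v)$, and $A_i$ is an $m$-arc of $s_{A_j}(D_{\Gamma_M}(v))$. $\mathscr G$ is the family of pairs $(G,M)$ such that for every perfect matching graph representing $(G,M)$ (every plane embedding, every ordering of $M$) the hypercube of states contains no bad face. *)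

(* Defs.v *)
From HB Require Import structures.
From mathcomp Require Import all_boot all_order all_fingroup.
Set Implicit Arguments. Unset Strict Implicit. Unset Printing Implicit Defensive.

Section Maps.
Variables (D V : finType).

Definition is_rotation (vtx : D -> V) (sigma : {perm D}) : Prop :=
  forall d d', (vtx d == vtx d') = fconnect sigma d d'.

Definition edge_involution (alpha : D -> D) : Prop :=
  forall d, alpha (alpha d) = d /\ alpha d != d.

Definition ncomp_map (alpha : D -> D) (sigma : {perm D}) : nat :=
  n_comp (fun x y => (y == sigma x) || (y == alpha x)) predT.

(* Genus 0 (embedding in S^2): Euler's formula V - E + F = 2 * #components,
   with V = #sigma-orbits, E = #D/2, F = #orbits of sigma \o alpha. *)
Definition planar_map (alpha : D -> D) (sigma : {perm D}) : Prop :=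
  2 * (fcard sigma predT + fcard (sigma \o alpha) predT)
  = #|D| + 4 * ncomp_map alpha sigma.

(* For a matching dart m at vertex u (other end alpha m at v),
   the darts a = sigma m, b = sigma^-1 m at u and c = sigma^-1 (alpha m),
   d = sigma (alpha m) at v satisfy: a,c on one side of e, b,d on the other.
   0-resolution joins a-c, b-d; 1-resolution joins a-d, b-c.
   [partner s x] is the non-matching dart joined to the non-matching dart x
   by the strand of the s-resolution at the matching edge at x's vertex. *)
Definition partner (alpha : D -> D) (sigma : {perm D}) (M : pred D)
  (s : D -> bool) (x : D) : D :=
  if M ((sigma^-1)%g x) then
    let m := (sigma^-1)%g x in
    if s m then sigma (alpha m) else (sigma^-1)%g (alpha m)
  else
    let m := sigma x in
    if s m then (sigma^-1)%g (alpha m) else sigma (alpha m).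

Definition ncircles (alpha : D -> D) (sigma : {perm D}) (M : pred D)
  (s : D -> bool) : nat :=
  n_comp (fun x y => [&& ~~ M x, ~~ M y &
            [|| y == alpha x, x == alpha y,
                y == partner alpha sigma M s x | x == partner alpha sigma M s y]])
         (predC M).

Definition upd (alpha : D -> D) (s : D -> bool) (i : D) : D -> bool :=
  fun d => [|| d == i, d == alpha i | s d].

(* The bad-face condition for the ordering (i, j), using
   s_{A_i}(D(v)) = D(v + e_i) and eta/Delta/m = change of #circles 0/+1/-1. *)
Definition bad_pair (alpha : D -> D) (sigma : {perm D}) (M : pred D)
  (v : D -> bool) (i j : D) : Prop :=
  let nc := ncircles alpha sigma M in
  [/\ nc (upd alpha v i) = nc v,
      nc (upd alpha (upd alpha v i) j) = nc (upd alpha v i),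
      nc (upd alpha v j) = (nc v).+1
    & nc (upd alpha v j) = (nc (upd alpha (upd alpha v j) i)).+1].

Definition has_bad_face (alpha : D -> D) (sigma : {perm D}) (M : pred D) : Prop :=
  exists (v : D -> bool) (i j : D),
    [/\ forall d, v (alpha d) = v d,
        M i /\ M j,
        j != i /\ j != alpha i,
        v i = false /\ v j = false
      & bad_pair alpha sigma M v i j \/ bad_pair alpha sigma M v j i].

(* (G, M) in script-G: no plane embedding (any ordering of M; orderings do
   not affect circle counts) has a bad face. *)
Definition in_scriptG (vtx : D -> V) (alpha : D -> D) (M : pred D) : Prop :=
  forall sigma : {perm D}, is_rotation vtx sigma -> planar_map alpha sigma ->
    ~ has_bad_face alpha sigma M.
End Maps.

Section Diagram.
Variables (T V : finType).

(* An oriented link diagram in S^2 all of whose components contain a crossing,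
   as a 4-valent plane map: darts T, crossings V, edge involution alpha,
   rotation sigma (ccw), orientation [out d] = the edge of d leaves its
   crossing at d.  Strands go straight through crossings and are consistently
   oriented: opposite ends at a crossing have opposite in/out status. *)
Definition oriented_link_diagram (vtx : T -> V) (alpha : T -> T)
  (sigma : {perm T}) (out : T -> bool) : Prop :=
  [/\ edge_involution alpha,
      is_rotation vtx sigma,
      forall x : V, #|[pred d | vtx d == x]| = 4,
      planar_map alpha sigma
    & (forall d, out (alpha d) = ~~ out d) /\
      (forall d, out (sigma (sigma d)) = ~~ out d)].

(* Flattening: vertex (x,false) = u (incoming side), (x,true) = v.
   Darts: inl d (diagram edge-end d), inr (x,b) (matching edge at crossing x). *)
Definition flat_vtx (vtx : T -> V) (out : T -> bool) (z : T + (V * bool)) : V * bool :=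
  match z with inl d => (vtx d, out d) | inr p => p end.

Definition flat_alpha (alpha : T -> T) (z : T + (V * bool)) : T + (V * bool) :=
  match z with inl d => inl (alpha d) | inr (x, b) => inr (x, ~~ b) end.

Definition flat_M : pred (T + (V * bool)) :=
  fun z => if z is inr _ then true else false.
End Diagram.

(* Main.v *)
From HB Require Import structures.
Require Import Defs.
From mathcomp Require Import all_boot all_order all_fingroup.
From mathcomp Require Import zify.
Set Implicit Arguments. Unset Strict Implicit. Unset Printing Implicit Defensive.

Lemma porbitE' (T : finType) (s : {perm T}) x : porbit s x = [set y | fconnect s x y].
Proof.
apply/setP=> y; rewrite inE; apply/porbitP/idP.
  by case=> i ->; rewrite permX; apply: fconnect_iter.
by move=> h; exists (findex s x y); rewrite permX iter_findex.
Qed.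

Lemma card_porbits (T : finType) (s : {perm T}) : #|porbits s| = n_comp (frel s) T.
Proof.
have symf : connect_sym (frel s) := fconnect_sym (@perm_inj _ s).
have -> : porbits s = porbit s @: [set x | roots (frel s) x].
  apply/setP=> P; apply/imsetP/imsetP => [[x _ ->]|[x _ ->]]; last by exists x.
  exists (root (frel s) x); first by rewrite inE roots_root.
  rewrite !porbitE'; apply/setP=> y; rewrite !inE.
  by rewrite (same_connect symf (connect_root _ x)).
rewrite card_in_imset; last first.
  move=> x y; rewrite !inE => /eqP rx /eqP ry; rewrite !porbitE' => E.
  have : y \in [set z | fconnect s x z] by rewrite E inE connect0.
  by rewrite inE => /(rootP symf); rewrite rx ry.
rewrite /n_comp_mem; apply: eq_card => x; by rewrite !inE andbT.
Qed.

Section Abs.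
Variables (X W : finType) (fv : X -> W) (al : X -> X) (rho : {perm X}) (M : pred X) (o : X -> bool).
Hypothesis alK : involutive al.
Hypothesis Mal : forall z, M (al z) = M z.
Hypothesis oal : forall z, o (al z) = ~~ o z.
Hypothesis rot : is_rotation fv rho.
Hypothesis ofv : forall z z', fv z = fv z' -> o z = o z'.
Hypothesis Muniq : forall z z', M z -> M z' -> fv z = fv z' -> z = z'.
Hypothesis card3 : forall z, #|[pred y | fv y == fv z]| = 3.
Hypothesis hasM : forall z, exists2 m, M m & fv m = fv z.

Lemma fv_rho z : fv (rho z) = fv z.
Proof. by apply/esym/eqP; rewrite rot fconnect1. Qed.

Lemma order3 z : fingraph.order rho z = 3.
Proof. rewrite /fingraph.order -(card3 z); apply: eq_card => y; rewrite inE -rot eq_sym //. Qed.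

Lemma orbit3 z : fingraph.orbit rho z = [:: z; rho z; rho (rho z)].
Proof. by rewrite /fingraph.orbit order3. Qed.

Lemma rho3 z : rho (rho (rho z)) = z.
Proof. by have := iter_order (@perm_inj _ rho) z; rewrite order3. Qed.

Lemma uniq3 z : [&& z != rho z, z != rho (rho z) & rho z != rho (rho z)].
Proof.
have := orbit_uniq rho z; rewrite orbit3 /= !inE !negb_or andbT.
by case/andP=> /andP[-> ->] ->.
Qed.

Lemma rhoV z : (rho^-1)%g z = rho (rho z).
Proof. by rewrite -{1}(rho3 z) permK. Qed.

Lemma rhoVV z : (rho^-1)%g ((rho^-1)%g z) = rho z.
Proof. by apply: (@perm_inj _ rho); apply: (@perm_inj _ rho); rewrite !permKV rho3. Qed.

Lemma notM_rho m : M m -> ~~ M (rho m).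
Proof.
move=> Mm; apply/negP => Mr; have E := Muniq Mr Mm (fv_rho m).
by move: (uniq3 m) => /and3P[h _ _]; rewrite E eqxx in h.
Qed.

Lemma notM_rhoV m : M m -> ~~ M ((rho^-1)%g m).
Proof.
move=> Mm; rewrite rhoV; apply/negP => Mr.
have E := Muniq Mr Mm (etrans (fv_rho _) (fv_rho m)).
by move: (uniq3 m) => /and3P[_ h _]; rewrite E eqxx in h.
Qed.

Lemma typ z : ~~ M z -> exists2 m, M m & (z = rho m) \/ (z = (rho^-1)%g m).
Proof.
move=> nMz; have [m Mm fm] := hasM z; exists m => //.
have : fconnect rho z m by rewrite -rot fm.
rewrite fconnect_orbit orbit3 !inE => /or3P[/eqP e|/eqP e|/eqP e].
- by rewrite -e Mm in nMz.
- by right; rewrite e permK.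
- by left; rewrite e rho3.
Qed.

Local Notation p := (partner al rho M).

Lemma pA s m : M m -> p s (rho m) = if s m then rho (al m) else (rho^-1)%g (al m).
Proof. by move=> Mm; rewrite /partner permK Mm. Qed.

Lemma pB s m : M m -> p s ((rho^-1)%g m) = if s m then (rho^-1)%g (al m) else rho (al m).
Proof. by move=> Mm; rewrite /partner rhoVV (negbTE (notM_rho Mm)) permKV. Qed.

Lemma o_rho z : o (rho z) = o z.
Proof. exact: ofv (fv_rho z). Qed.

Lemma o_rhoV z : o ((rho^-1)%g z) = o z.
Proof. by rewrite rhoV !o_rho. Qed.

Lemma M_p s z : ~~ M z -> ~~ M (p s z).
Proof.
move=> /typ[m Mm [->|->]]; rewrite ?pA ?pB //; have Ma : M (al m) by rewrite Mal.
  by case: (s m); rewrite ?notM_rho ?notM_rhoV.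
by case: (s m); rewrite ?notM_rho ?notM_rhoV.
Qed.

Lemma o_p s z : ~~ M z -> o (p s z) = ~~ o z.
Proof.
move=> /typ[m Mm [->|->]]; rewrite ?pA ?pB //.
  by case: (s m); rewrite ?o_rho ?o_rhoV oal.
by case: (s m); rewrite ?o_rho ?o_rhoV oal.
Qed.

Lemma pK s (Hs : forall m, s (al m) = s m) z : ~~ M z -> p s (p s z) = z.
Proof.
have MaM m : M m -> M (al m) by rewrite Mal.
move=> /typ[m Mm [->|->]]; rewrite ?pA ?pB //; case E: (s m);
  rewrite ?pA ?pB ?MaM // Hs E alK //.
Qed.


Definition cf (s : X -> bool) z := if M z then z else if o z then al z else p s z.

Lemma cf_inj s (Hs : forall m, s (al m) = s m) : injective (cf s).
Proof.
move=> z1 z2; rewrite /cf.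
have alI := can_inj alK.
case M1: (M z1); case M2: (M z2) => //.
- move=> E; move: M1; rewrite E; case: (o z2).
    by rewrite Mal M2.
  by move=> h; move: (M_p s (negbT M2)); rewrite h.
- move=> E; move: M2; rewrite -E; case: (o z1).
    by rewrite Mal M1.
  by move=> h; move: (M_p s (negbT M1)); rewrite h.
case o1: (o z1); case o2: (o z2).
- exact: alI.
- move=> E; have := congr1 o E; rewrite oal o_p ?M2 // o1 o2 //.
- move=> E; have := congr1 o E; rewrite oal o_p ?M1 // o1 o2 //.
- move=> E; have := congr1 (p s) E; rewrite !pK ?M1 ?M2 //.
Qed.

Definition cp s Hs := perm (@cf_inj s Hs).

Definition Rs s : rel X := fun x y => [&& ~~ M x, ~~ M y &
   [|| y == al x, x == al y, y == p s x | x == p s y]].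

Lemma Rs_sym s : symmetric (Rs s).
Proof.
move=> x y; apply/idP/idP => /and3P[a b c]; apply/and3P; split => //;
  by case/or4P: c => ->; rewrite ?orbT.
Qed.

Lemma fix_connect (f : X -> X) x : f x = x -> forall y, fconnect f x y = (y == x).
Proof.
move=> fx y; apply/idP/idP => [h|/eqP ->]; last exact: connect0.
have it : forall n, iter n f x = x by elim=> //= n ->.
by rewrite -(iter_findex h) it.
Qed.

Lemma nc_eq s (Hs : forall m, s (al m) = s m) :
  ncircles al rho M s + #|M| = #|porbits (cp Hs)|.
Proof.
set sg := cp Hs.
have sgE z : sg z = cf s z by rewrite permE.
have symR : connect_sym (Rs s) := sym_connect_sym (@Rs_sym s).
have symF : connect_sym (frel sg) := fconnect_sym (@perm_inj _ sg).
have clR : closed (Rs s) (predC M).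
  by move=> x y /and3P[a b _]; rewrite !inE a b.
have stepF x y : ~~ M x -> (sg x == y) || (sg y == x) -> connect (frel sg) x y.
  move=> _ /orP[h|h]; first by apply: connect1.
  by rewrite symF; apply: connect1.
have adj : rel_adjunction id (Rs s) (frel sg) (predC M).
  split => [x _ | x y _]; first by exists x; apply: connect0.
  apply/idP/idP.
    apply: connect_sub => {}x {}y /eqP <-; rewrite sgE /cf.
    case Mx: (M x); first exact: connect0.
    apply: connect1; rewrite /Rs Mx /=.
    case: (o x); first by rewrite Mal Mx eqxx.
    by rewrite M_p ?Mx // eqxx !orbT.
  apply: connect_sub => {}x {}y /and3P[nMx nMy].
  case/or4P => /eqP E; apply: stepF => //; rewrite !sgE /cf (negbTE nMx) (negbTE nMy).
  - case ox: (o x); first by rewrite E eqxx.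
    by rewrite E oal ox alK eqxx orbT.
  - case oy: (o y); first by rewrite E eqxx orbT.
    by rewrite E oal oy alK eqxx.
  - case ox: (o x); last by rewrite E eqxx.
    by rewrite E o_p // ox pK // eqxx orbT.
  - case oy: (o y); last by rewrite E eqxx orbT.
    by rewrite E o_p // oy pK // eqxx.
rewrite /ncircles -/(Rs s).
rewrite (adjunction_n_comp id symR symF clR adj).
rewrite card_porbits (n_compC (predC M)).
congr (_ + _).
rewrite /n_comp_mem; apply: eq_card => x; rewrite !inE negbK.
case Mx: (M x); rewrite ?andbF ?andbT //.
have fx : sg x = x by rewrite sgE /cf Mx.
rewrite /roots /root; case: pickP => [y|] /=; last by rewrite eqxx.
by rewrite (fix_connect fx) => /eqP ->; rewrite eqxx -Mx.
Qed.

Lemma flip (s s' : X -> bool) (Hs : forall m, s (al m) = s m)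
  (Hs' : forall m, s' (al m) = s' m) (m0 : X) :
  M m0 -> o m0 = false -> s m0 = false ->
  (forall d, s' d = [|| d == m0, d == al m0 | s d]) ->
  ncircles al rho M s' != ncircles al rho M s.
Proof.
move=> Mm0 om0 sm0 Es'.
set a := rho m0; set b := (rho^-1)%g m0.
have s'm0 : s' m0 = true by rewrite Es' eqxx.
have E : cp Hs' = (tperm a b * cp Hs)%g.
  apply/permP => z; rewrite permM.
  case: (tpermP a b z) => [->|->|za zb]; rewrite !permE.
  - rewrite /cf /a /b ?(negbTE (notM_rho Mm0)) ?(negbTE (notM_rhoV Mm0)) ?o_rho ?o_rhoV om0.
    by rewrite pA // pB // s'm0 sm0.
  - rewrite /cf /a /b ?(negbTE (notM_rho Mm0)) ?(negbTE (notM_rhoV Mm0)) ?o_rho ?o_rhoV om0.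
    by rewrite pA // pB // s'm0 sm0.
  rewrite /cf; case Mz: (M z) => //; case oz: (o z) => //.
  have [m Mm zm] := typ (negbT Mz).
  have om : o m = false by case: zm oz => ->; rewrite ?o_rho ?o_rhoV.
  have sm : s' m = s m.
    rewrite Es'; have -> : (m == m0) = false.
      by apply/negbTE/eqP => e; case: zm; rewrite e.
    have -> // : (m == al m0) = false.
    by apply/negbTE/eqP => e; move: om; rewrite e oal om0.
  by case: zm => ->; rewrite ?pA ?pB // sm.
have h1 := nc_eq Hs; have h2 := nc_eq Hs'.
have ab : a != b.
  by rewrite /a /b rhoV; move: (uniq3 m0) => /and3P[_ _ ->].
have := porbits_mul_tperm (cp Hs) a b; rewrite /= ab -E -h1 -h2.
move=> H; apply/eqP => Enc; move: H; rewrite Enc -!addnA => /addnI.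
by move/addnI; case: (_ \notin _).
Qed.

End Abs.

Lemma card_sum_pred (A B : finType) (P : pred (A + B)) :
  #|P| = #|[pred a | P (inl a)]| + #|[pred b | P (inr b)]|.
Proof.
rewrite -(cardID [pred z : A + B | if z is inl _ then true else false] P).
have inlI : injective (@inl A B) by move=> x y [].
have inrI : injective (@inr A B) by move=> x y [].
congr (_ + _).
  rewrite -(card_image inlI [pred a | P (inl a)]); apply: eq_card => -[x|y].
    by rewrite mem_image // !inE andbT.
  rewrite !inE andbF; apply/esym/negbTE/imageP => -[x _ e] //.
rewrite -(card_image inrI [pred a | P (inr a)]); apply: eq_card => -[x|y].
  by rewrite !inE /=; apply/esym/negbTE/imageP => -[y _ e].
by rewrite mem_image // !inE andbT.
Qed.

Theorem mainTheorem11 (T V : finType) (vtx : T -> V) (alpha : T -> T)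
  (sigma : {perm T}) (out : T -> bool) :
  oriented_link_diagram vtx alpha sigma out ->
  in_scriptG (flat_vtx vtx out) (flat_alpha alpha) (@flat_M T V).
Proof.
case=> ealpha rotd c4 _ [oalpha osig].
move=> rho rotr _ [v [i [j [vinv [Mi Mj] _ [vi vj] bad]]]].
pose fv := flat_vtx vtx out.
pose al := @flat_alpha T V alpha.
pose M := @flat_M T V.
pose o z := (fv z).2.
have alK : involutive al.
  by case=> [d|[x b]] //=; [case: (ealpha d) => -> | rewrite negbK].
have Mal z : M (al z) = M z by case: z => [|[]].
have oal z : o (al z) = ~~ o z.
  by case: z => [d|[x b]]; rewrite /o /fv /al /= ?oalpha.
have ofv z z' : fv z = fv z' -> o z = o z' by rewrite /o => ->.
have Muniq z z' : M z -> M z' -> fv z = fv z' -> z = z'.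
  by move=> Mz Mz'; case: z Mz => // p1 _; case: z' Mz' => // p2 _ /= ->.
have hasM z : exists2 m, M m & fv m = fv z by exists (inr (fv z)).
have vsig d : vtx (sigma d) = vtx d by apply/esym/eqP; rewrite rotd fconnect1.
have c2 x b : #|[pred d | (vtx d == x) && (out d == b)]| = 2.
  have le b' : #|[pred d | (vtx d == x) && (out d == b')]|
             <= #|[pred d | (vtx d == x) && (out d == ~~ b')]|.
    have gI : injective (fun d => sigma (sigma d)) by move=> d1 d2 /perm_inj/perm_inj.
    rewrite -(card_image gI); apply/subset_leq_card/subsetP => y.
    move=> /imageP[d /andP[/eqP vd /eqP od] ->].
    by rewrite inE !vsig vd osig od !eqxx.
  have tot : #|[pred d | (vtx d == x) && (out d == true)]|
           + #|[pred d | (vtx d == x) && (out d == false)]| = 4.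
    rewrite -(c4 x) -(cardID [pred d | out d] [pred d | vtx d == x]).
    congr (_ + _); apply: eq_card => d; rewrite !inE;
      by case: (out d); rewrite ?andbT ?andbF.
  have l1 := le true; have l2 := le false; simpl in l1, l2.
  by case: b; lia.
have card3 z : #|[pred y | fv y == fv z]| = 3.
  rewrite card_sum_pred; case: (fv z) => x b.
  rewrite (eq_card (B := [pred d | (vtx d == x) && (out d == b)])) ?c2; last first.
    by move=> d; rewrite !inE /= xpair_eqE.
  by rewrite (eq_card (B := pred1 (x, b))) ?card1.
have key k : M k -> v k = false -> ncircles al rho M (upd al v k) != ncircles al rho M v.
  move=> Mk vk.
  have Hs' m : upd al v k (al m) = upd al v k m.
    by rewrite /upd vinv -{1}(alK k) !(can_eq alK) orbCA.
  case ok: (o k).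
    apply: (@flip _ _ fv al rho M o alK Mal oal rotr ofv Muniq card3 hasM v (upd al v k) vinv Hs' (al k)).
    - by rewrite Mal.
    - by rewrite oal ok.
    - by rewrite vinv.
    - by move=> d; rewrite /upd alK orbCA.
  apply: (@flip _ _ fv al rho M o alK Mal oal rotr ofv Muniq card3 hasM v (upd al v k) vinv Hs' k) => //.
move: (key i Mi vi) (key j Mj vj).
by case: bad => -[e1 _ _ _]; rewrite e1 eqxx ?andbF.
Qed.
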